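(* Let $\theta$ be a regular cardinal and let $I$ be a weakly $\theta$-saturated, $\theta$-indecomposable ideal on a cardinal $\kappa$. Let $\langle S_\alpha:\alpha<\kappa\rangle$ be a sequence of sets of ordinals with $|S_\alpha|<\theta$ for all $\alpha$. If $\langle h_\beta:\beta<\tau\rangle$ is a sequence of functions in $\prod_{\alpha<\kappa}S_\alpha$ that is increasing in the pointwise order $\leq$, with $\mathrm{cf}(\tau)\geq\theta$, then it is eventually constant modulo $I$: there is $\beta^*<\tau$ with $\{\alpha:h_\beta(\alpha)\neq h_{\beta^*}(\alpha)\}\in I$ for all $\beta\geq\beta^*$.
   Context: By an ideal on a cardinal $\kappa$ we mean a proper ideal on $\kappa$ containing all bounded subsets of $\kappa$. $I$ is weakly $\theta$-saturated if there is no partition of $\kappa$ into $\theta$ pairwise disjoint sets not in $I$. $I$ is $\theta$-indecomposable if whenever $\langle A_i:i<\theta\rangle$ are subsets of $\kappa$ with $\bigcup_{i<\theta}A_i\notin I$, there is $w\subseteq\theta$ with $|w|<\theta$ and $\bigcup_{i\in w}A_i\notin I$. *)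

(* Defs.v *)
(* ordinals/cardinals are modelled as well-ordered types. *)
Set Implicit Arguments.

Definition leR {T : Type} (R : T -> T -> Prop) (x y : T) : Prop := R x y \/ x = y.

Definition is_wellorder {T : Type} (R : T -> T -> Prop) : Prop :=
  well_founded R /\
  (forall x, ~ R x x) /\
  (forall x y z, R x y -> R y z -> R x z) /\
  (forall x y, R x y \/ x = y \/ R y x).

Definition injective {A B : Type} (f : A -> B) : Prop :=
  forall x y, f x = f y -> x = y.

Definition card_ge_type {X : Type} (A : X -> Prop) (Th : Type) : Prop :=
  exists f : Th -> X, injective f /\ forall t, A (f t).

Definition card_lt_type {X : Type} (A : X -> Prop) (Th : Type) : Prop :=
  ~ card_ge_type A Th.

(* (K, R) is a cardinal: an initial ordinal, i.e. a well-order no proper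
   initial segment of which has the same cardinality as K *)
Definition is_cardinal {K : Type} (R : K -> K -> Prop) : Prop :=
  is_wellorder R /\ forall k : K, card_lt_type (fun x => R x k) K.

Definition cofinal {T : Type} (R : T -> T -> Prop) (A : T -> Prop) : Prop :=
  forall x, exists y, A y /\ leR R x y.

Definition cf_ge {T : Type} (R : T -> T -> Prop) (Th : Type) : Prop :=
  forall A : T -> Prop, cofinal R A -> card_ge_type A Th.

(* regular cardinal: infinite cardinal equal to its own cofinality *)
Definition is_regular {Th : Type} (R : Th -> Th -> Prop) : Prop :=
  is_cardinal R /\ (exists f : nat -> Th, injective f) /\ cf_ge R Th.

Definition is_ideal {K : Type} (R : K -> K -> Prop) (I : (K -> Prop) -> Prop) : Prop :=
  ~ I (fun _ => True) /\
  (forall A B : K -> Prop, I B -> (forall x, A x -> B x) -> I A) /\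
  (forall A B : K -> Prop, I A -> I B -> I (fun x => A x \/ B x)) /\
  (forall A : K -> Prop, (exists b, forall x, A x -> R x b) -> I A).

Definition weakly_saturated {K : Type} (I : (K -> Prop) -> Prop) (Th : Type) : Prop :=
  ~ exists P : Th -> K -> Prop,
      (forall i j x, P i x -> P j x -> i = j) /\
      (forall x, exists i, P i x) /\
      (forall i, ~ I (P i)).

Definition indecomposable {K : Type} (I : (K -> Prop) -> Prop) (Th : Type) : Prop :=
  forall A : Th -> K -> Prop,
    ~ I (fun x => exists i, A i x) ->
    exists w : Th -> Prop, card_lt_type w Th /\
      ~ I (fun x => exists i, w i /\ A i x).

(* Main.v *)
Require Import Defs.
From Stdlib Require Import Classical ClassicalEpsilon FunctionalExtensionality.

Lemma wf_rec_choice (A X : Type) (R : A -> A -> Prop) (x0 : X) (wf : well_founded R)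
  (G : A -> (A -> X) -> X -> Prop)
  (Gc : forall i f f', (forall j, R j i -> f j = f' j) -> forall x, G i f x -> G i f' x)
  (Gex : forall i f, exists x, G i f x) :
  exists f : A -> X, forall i, G i f (f i).
Proof.
  pose (ext := fun i (rec : forall j, R j i -> X) (j : A) =>
     match excluded_middle_informative (R j i) with left H => rec j H | right _ => x0 end).
  pose (F := fun i (rec : forall j, R j i -> X) =>
     proj1_sig (constructive_indefinite_description _ (Gex i (ext i rec)))).
  pose (f := Fix wf (fun _ => X) F).
  assert (Hext : forall i r r', (forall j p, r j p = r' j p) -> ext i r = ext i r').
  { intros i r r' H. apply functional_extensionality. intro j. unfold ext.
    destruct (excluded_middle_informative (R j i)); auto. }
  assert (Feq : forall i, f i = F i (fun j _ => f j)).
  { intro i. unfold f. refine (Fix_eq wf (fun _ => X) F _ i).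
    intros x r r' H. unfold F.
    rewrite (Hext x r r' H). reflexivity. }
  exists f. intro i. rewrite (Feq i). unfold F.
  pose proof (proj2_sig (constructive_indefinite_description _ (Gex i (ext i (fun j _ => f j))))) as Hx.
  apply Gc with (ext i (fun j _ => f j)); [|exact Hx].
  intros j Hj. unfold ext. destruct (excluded_middle_informative (R j i)); [reflexivity|contradiction].
Qed.

Lemma wf_min {A} (R : A -> A -> Prop) (P : A -> Prop) :
  well_founded R -> forall x, P x -> exists m, P m /\ forall j, R j m -> ~ P j.
Proof.
  intros wf x. induction x as [x IH] using (well_founded_ind wf). intros Px.
  destruct (classic (exists j, R j x /\ P j)) as [[j [Rj Pj]]|N].
  - eauto.
  - exists x; split; auto. intros j Rj Pj; apply N; eauto.
Qed.

Lemma image_card_lt {X Y Th : Type} (f : X -> Y) (A : X -> Prop) :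
  card_lt_type A Th -> card_lt_type (fun z => exists j, A j /\ z = f j) Th.
Proof.
  intros HA [e [Hinj He]]. apply HA.
  exists (fun t => proj1_sig (constructive_indefinite_description _ (He t))). split.
  - intros t t' Heq. apply Hinj.
    pose proof (proj2_sig (constructive_indefinite_description _ (He t))) as [_ H1].
    pose proof (proj2_sig (constructive_indefinite_description _ (He t'))) as [_ H2].
    rewrite H1, H2, Heq. reflexivity.
  - intro t. exact (proj1 (proj2_sig (constructive_indefinite_description _ (He t)))).
Qed.

Lemma cf_bound {T Th : Type} (R : T -> T -> Prop) (A : T -> Prop) :
  is_wellorder R -> cf_ge R Th -> card_lt_type A Th -> exists x, forall y, A y -> R y x.
Proof.
  intros [wf [irr [tr tri]]] Hcf HA.
  destruct (classic (cofinal R A)) as [C|C].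
  - exfalso; apply HA, Hcf, C.
  - unfold cofinal in C. apply not_all_ex_not in C. destruct C as [x Hx].
    exists x. intros y Ay. destruct (tri y x) as [H|[H|H]]; auto; exfalso; apply Hx;
    exists y; split; auto; unfold leR; auto.
Qed.

Lemma single_card_lt {Th : Type} (i : Th) :
  (exists f : nat -> Th, injective f) -> card_lt_type (fun z => z = i) Th.
Proof.
  intros [n Hn] [e [He Hei]].
  assert (H : n 0 = n 1). { apply He. rewrite (Hei (n 0)), (Hei (n 1)). reflexivity. }
  apply Hn in H. discriminate.
Qed.

Lemma wo_antisym {T} (R : T -> T -> Prop) x y :
  is_wellorder R -> leR R x y -> leR R y x -> x = y.
Proof.
  intros [_ [irr [tr _]]] [H|H] [H'|H']; auto.
  exfalso; exact (irr x (tr _ _ _ H H')).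
Qed.

Theorem corollary2p2
  (Th : Type) (ltTh : Th -> Th -> Prop) (HTh : is_regular ltTh)
  (K : Type) (ltK : K -> K -> Prop) (HK : is_cardinal ltK)
  (I : (K -> Prop) -> Prop) (HI : is_ideal ltK I)
  (Hsat : weakly_saturated I Th) (Hind : indecomposable I Th)
  (O : Type) (ltO : O -> O -> Prop) (HO : is_wellorder ltO)
  (S : K -> O -> Prop) (HS : forall a : K, card_lt_type (S a) Th)
  (T : Type) (ltT : T -> T -> Prop) (HT : is_wellorder ltT)
  (h : T -> K -> O)
  (Hh : forall b a, S a (h b a))
  (Hinc : forall b b', leR ltT b b' -> forall a, leR ltO (h b a) (h b' a))
  (Hcf : cf_ge ltT Th) :
  exists bstar : T, forall b : T, leR ltT bstar b ->
    I (fun a => h b a <> h bstar a).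
Proof.
  destruct HTh as [[HwoTh HcardTh] [Hnat HcfTh]].
  pose proof HwoTh as [wfTh [irrTh [trTh triTh]]].
  pose proof HO as [wfO [irrO [trO triO]]].
  pose proof HT as [wfT [irrT [trT triT]]].
  destruct HI as [Iprop [Idown [Iunion Ibdd]]].
  assert (Iempty : I (fun _ => False)).
  { apply NNPP; intro N. apply Hsat. exists (fun _ _ => False). split; [intros; contradiction|split].
    - intro x. exfalso. apply N. apply Ibdd. exists x. intros ? [].
    - intros i Hi; apply N; exact Hi. }
  apply NNPP; intro Hneg.
  assert (Hnext : forall y, exists b, ltT y b /\ ~ I (fun a => h b a <> h y a)).
  { intro y. apply NNPP; intro C. apply Hneg. exists y. intros b Hb.
    apply NNPP; intro nI. destruct Hb as [Hb|Hb].
    - apply C; exists b; split; auto.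
    - subst b. apply nI. apply Idown with (1:=Iempty). intros a Ha; apply Ha; reflexivity. }
  assert (Hbig : forall b1 y b a, leR ltT b1 y -> leR ltT y b -> h b a <> h y a -> h b a <> h b1 a).
  { intros b1 y b a H1 H2 H3 Heq. apply H3. apply (wo_antisym _ _ _ HO).
    - rewrite Heq. apply Hinc; auto.
    - apply Hinc; auto. }
  destruct Hnat as [nTh HnTh].
  destruct (Hnext (proj1_sig (constructive_indefinite_description _
     (Hcf (fun _ => True) (fun x => ex_intro _ x (conj Logic.I (or_intror eq_refl))))) (nTh 0)))
    as [t0 _].
  destruct (wf_rec_choice Th T ltTh t0 wfTh
    (fun i f x => (forall j, ltTh j i -> ltT (f j) x) /\
                  (forall j, ltTh j i -> ~ I (fun a => h x a <> h (f j) a))))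
    as [beta Hbeta].
  { intros i f f' Hff x [H1 H2]. split; intros j Hj; rewrite <- (Hff j Hj); auto. }
  { intros i f.
    destruct (cf_bound _ _ HT Hcf (image_card_lt f _ (HcardTh i))) as [y Hy].
    destruct (Hnext y) as [b [Hyb Hb]]. exists b. split.
    - intros j Hj. apply trT with y; auto. apply Hy; eauto.
    - intros j Hj HI'. apply Hb. apply Idown with (1:=HI'). intros a Ha.
      apply Hbig with y; auto. left; apply Hy; eauto. left; auto. }
  assert (Hbmono : forall i i' a, leR ltTh i i' -> leR ltO (h (beta i) a) (h (beta i') a)).
  { intros i i' a [H|H].
    - apply Hinc. left. exact (proj1 (Hbeta i') i H).
    - subst; right; reflexivity. }
  pose (W := fun a i => forall j, ltTh j i -> h (beta j) a <> h (beta i) a).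
  assert (HW : forall a, card_lt_type (W a) Th).
  { intros a [e [Hinj HeW]]. apply (HS a). exists (fun t => h (beta (e t)) a). split.
    - intros t t' Heq. apply Hinj.
      destruct (triTh (e t) (e t')) as [H|[H|H]]; auto; exfalso.
      + apply (HeW t' _ H); auto.
      + apply (HeW t _ H); auto.
    - intro t; apply Hh. }
  assert (Hg0 : exists g : K -> Th, forall a i, W a i -> ltTh i (g a)).
  { exists (fun a => proj1_sig (constructive_indefinite_description _
               (cf_bound _ _ HwoTh HcfTh (HW a)))).
    intros a i Hi.
    exact (proj2_sig (constructive_indefinite_description _ (cf_bound _ _ HwoTh HcfTh (HW a))) i Hi). }
  destruct Hg0 as [g Hg].
  assert (Key : forall i i' a, ltTh i i' -> h (beta i') a <> h (beta i) a -> ltTh i (g a)).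
  { intros i i' a Hii' Hne.
    destruct (wf_min ltTh (fun m => h (beta m) a = h (beta i') a) wfTh i' eq_refl) as [m [Pm Hm]].
    assert (Wm : W a m).
    { intros j Hj Heq. apply (Hm j Hj). rewrite Heq. exact Pm. }
    pose proof (Hg a m Wm) as Hmg.
    destruct (triTh i (g a)) as [H|[H|H]]; auto; exfalso.
    - subst. assert (E : h (beta (g a)) a = h (beta i') a).
      { apply (wo_antisym _ _ _ HO). apply Hbmono; left; auto.
        rewrite <- Pm. apply Hbmono; left; auto. }
      auto.
    - assert (E : h (beta i) a = h (beta i') a).
      { apply (wo_antisym _ _ _ HO). apply Hbmono; left; auto.
        rewrite <- Pm. apply Hbmono; left; eauto. }
      auto. }
  assert (HQ : forall i, exists j, ~ I (fun a => ltTh i (g a) /\ ltTh (g a) j)).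
  { intro i. destruct (cf_bound _ _ HwoTh HcfTh (single_card_lt i (ex_intro _ nTh HnTh))) as [i' Hi'].
    pose proof (Hi' i eq_refl) as Hii'.
    pose proof (proj2 (Hbeta i') i Hii') as Hpos.
    destruct (Hind (fun k a => ltTh i k /\ g a = k)) as [w [Hw Hwpos]].
    { intro HU. apply Hpos. apply Idown with (1:=HU). intros a Ha.
      exists (g a). split; auto. apply Key with i'; auto. }
    destruct (cf_bound _ _ HwoTh HcfTh Hw) as [j Hj]. exists j. intro HQ. apply Hwpos.
    apply Idown with (1:=HQ). intros a [k [wk [Hik Hgk]]]. subst k. split; auto. }
  destruct (wf_rec_choice Th Th ltTh (nTh 0) wfTh
    (fun i f x => ltTh i x /\
       ~ I (fun a => ltTh (g a) x /\ forall j, ltTh j i -> ~ ltTh (g a) (f j))))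
    as [gamma Hgamma].
  { intros i f f' Hff x [H1 H2]. split; auto. intro H; apply H2.
    apply Idown with (1:=H). intros a [Ha1 Ha2]. split; auto.
    intros j Hj. rewrite <- (Hff j Hj). auto. }
  { intros i f.
    destruct (cf_bound _ _ HwoTh HcfTh (image_card_lt f _ (HcardTh i))) as [y1 Hy1].
    assert (Hy : exists y, leR ltTh y1 y /\ leR ltTh i y).
    { destruct (triTh i y1) as [H|[H|H]].
      - exists y1; split; [right|left]; auto.
      - exists y1; split; right; auto.
      - exists i; split; [left|right]; auto. }
    destruct Hy as [y [Hy1y Hiy]].
    destruct (HQ y) as [j Hj].
    assert (Hne : exists a, ltTh y (g a) /\ ltTh (g a) j).
    { apply NNPP; intro N. apply Hj. apply Idown with (1:=Iempty). intros a Ha; apply N; eauto. }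
    destruct Hne as [a0 [Ha1 Ha2]].
    assert (Hyj : ltTh y j) by eauto.
    exists j. split.
    - destruct Hiy as [Hiy|Hiy]; [eauto|subst; auto].
    - intro H; apply Hj. apply Idown with (1:=H). intros a [Hya Haj]. split; auto.
      intros j' Hj' Hlt.
      assert (Hfy : ltTh (f j') y).
      { destruct Hy1y as [Hy1y|Hy1y]; [apply trTh with y1; auto; apply Hy1; eauto|subst; apply Hy1; eauto]. }
      apply (irrTh (f j')). eauto. }
  apply Hsat.
  exists (fun i a => ltTh (g a) (gamma i) /\ forall j, ltTh j i -> ~ ltTh (g a) (gamma j)).
  split; [|split].
  - intros i j a [Hi1 Hi2] [Hj1 Hj2].
    destruct (triTh i j) as [H|[H|H]]; auto; exfalso; [apply (Hj2 i H Hi1)|apply (Hi2 j H Hj1)].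
  - intro a. pose proof (proj1 (Hgamma (g a))) as Hga.
    destruct (wf_min ltTh (fun m => ltTh (g a) (gamma m)) wfTh _ Hga) as [m [Hm1 Hm2]].
    exists m; split; auto.
  - intro i; exact (proj2 (Hgamma i)).
Qed.
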